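(* Let $(\mathfrak{g},[\cdot,\cdot]_{\mathfrak{g}},\phi_{\mathfrak{g}})$ be a finite-dimensional weakly involutive Hom-Lie algebra and let $r\in\mathfrak g\otimes\mathfrak g$ satisfy $(\phi_{\mathfrak g}\otimes\mathrm{Id})r=(\mathrm{Id}\otimes\phi_{\mathfrak g})r$. Define $\Delta:\mathfrak g\to\mathfrak g\otimes\mathfrak g$ by $\Delta(x)=(\mathrm{ad}_x\otimes\phi_{\mathfrak g}+\phi_{\mathfrak g}\otimes\mathrm{ad}_x)r$ and a bilinear map $[\cdot,\cdot]_{\mathfrak g^*}$ on $\mathfrak g^*$ by $\langle[a,b]_{\mathfrak g^*},x\rangle=\langle\Delta(x),a\otimes b\rangle$. Then $(\mathfrak g^*,[\cdot,\cdot]_{\mathfrak g^*},\phi_{\mathfrak g}^* )$ is a weakly involutive Hom-Lie algebra if and only if (i) $(\mathrm{ad}_x\otimes\phi_{\mathfrak g}+\phi_{\mathfrak g}\otimes\mathrm{ad}_x)(r+\sigma(r))=0$ for all $x\in\mathfrak g$, and (ii) $(\mathrm{ad}_{\phi_{\mathfrak g}(x)}\otimes\phi_{\mathfrak g}\otimes\phi_{\mathfrak g}+\phi_{\mathfrak g}\otimes\mathrm{ad}_{\phi_{\mathfrak g}(x)}\otimes\phi_{\mathfrak g}+\phi_{\mathfrak g}\otimes\phi_{\mathfrak g}\otimes\mathrm{ad}_{\phi_{\mathfrak g}(x)})[r,r]_{\mathfrak g}=0$ for all $x\in\mathfrak g$. Under these conditions, $(\mathfrak g,\mathfrak g^* )$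 is a coboundary Hom-Lie bialgebra.
   Context: A Hom-Lie algebra $(\mathfrak{g},[\cdot,\cdot]_{\mathfrak{g}},\phi_{\mathfrak{g}})$ is a vector space with a skew-symmetric bilinear map $[\cdot,\cdot]_{\mathfrak g}$ and a linear map $\phi_{\mathfrak g}$ with $\phi_{\mathfrak g}[x,y]_{\mathfrak g}=[\phi_{\mathfrak g}(x),\phi_{\mathfrak g}(y)]_{\mathfrak g}$ and $[\phi_{\mathfrak g}(x),[y,z]_{\mathfrak g}]_{\mathfrak g}+[\phi_{\mathfrak g}(y),[z,x]_{\mathfrak g}]_{\mathfrak g}+[\phi_{\mathfrak g}(z),[x,y]_{\mathfrak g}]_{\mathfrak g}=0$; it is weakly involutive if $[\phi_{\mathfrak g}^2(x),y]_{\mathfrak g}=[x,y]_{\mathfrak g}$ for all $x,y$. $\mathrm{ad}_xy=[x,y]_{\mathfrak g}$; for $t\in\mathfrak g\otimes\mathfrak g$ and $z\in\mathfrak g$ write $\mathrm{ad}_zt=(\mathrm{ad}_z\otimes\phi_{\mathfrak g}+\phi_{\mathfrak g}\otimes\mathrm{ad}_z)t$. $\phi_{\mathfrak g}^*$ is the dual map. For $r=\sum_i x_i\otimes y_i$, $\sigma(r)=\sum_i y_i\otimes x_i$ and $[r,r]_{\mathfrak g}=\sum_{i,j}\big([x_i,x_j]_{\mathfrak g}\otimes\phi_{\mathfrak g}(y_i)\otimes\phi_{\mathfrak g}(y_j)+\phi_{\mathfrak g}(x_i)\otimes[y_i,x_j]_{\mathfrak g}\otimes\phi_{\mathfrak g}(y_j)+\phi_{\mathfrak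 g}(x_i)\otimes\phi_{\mathfrak g}(x_j)\otimes[y_i,y_j]_{\mathfrak g}\big)$. A Hom-Lie bialgebra $(\mathfrak g,\mathfrak g^* )$ is a pair of weakly involutive Hom-Lie algebras $(\mathfrak{g},[\cdot,\cdot]_{\mathfrak{g}},\phi_{\mathfrak{g}})$ and $(\mathfrak g^*,[\cdot,\cdot]_{\mathfrak g^*},\phi_{\mathfrak g}^* )$ such that the map $\Delta:\mathfrak g\to\mathfrak g\otimes\mathfrak g$ dual to $[\cdot,\cdot]_{\mathfrak g^*}$ (i.e. $\langle\Delta(x),a\otimes b\rangle=\langle x,[a,b]_{\mathfrak g^*}\rangle$) satisfies $\Delta[x,y]_{\mathfrak g}=\mathrm{ad}_{\phi_{\mathfrak g}(x)}\Delta(y)-\mathrm{ad}_{\phi_{\mathfrak g}(y)}\Delta(x)$ for all $x,y$. It is a coboundary Hom-Lie bialgebra if moreover $\Delta(x)=(\mathrm{ad}_x\otimes\phi_{\mathfrak g}+\phi_{\mathfrak g}\otimes\mathrm{ad}_x)r$ for some $r\in\mathfrak g\otimes\mathfrak g$ with $(\phi_{\mathfrak g}\otimes\mathrm{Id})r=(\mathrm{Id}\otimes\phi_{\mathfrak g})r$. *)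

(* Defs.v *)
(* A finite-dimensional vector space over a field K is
   modelled as 'rV[K]_n with standard basis e_i; its dual g^* is modelled as
   'rV[K]_n in the dual basis, with pairing <a, x> = sum_i a_i x_i.
   g (x) g is modelled by n x n matrices (coefficients on e_i (x) e_j),
   g (x) g (x) g by finite functions on 'I_n * 'I_n * 'I_n. *)
From HB Require Import structures.
From mathcomp Require Import all_boot all_order all_algebra.
Set Implicit Arguments.
Unset Strict Implicit.
Unset Printing Implicit Defensive.
Import Order.TTheory GRing.Theory.
Local Open Scope ring_scope.

Section HomLie.
Variables (K : fieldType) (n : nat).
Notation V := 'rV[K]_n.
Notation T2 := 'M[K]_n.
Notation T3 := {ffun 'I_n * 'I_n * 'I_n -> K}.

Definition ebasis (i : 'I_n) : V := delta_mx 0 i.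

Definition pairing (a x : V) : K := \sum_i a 0 i * x 0 i.

Definition hom_lie (br : V -> V -> V) (phi : V -> V) : Prop :=
  (forall (k : K) x y, phi (k *: x + y) = k *: phi x + phi y) /\
  [/\ (forall (k : K) x y z, br (k *: x + y) z = k *: br x z + br y z),
      (forall (k : K) x y z, br z (k *: x + y) = k *: br z x + br z y),
      (forall x y, br x y = - br y x),
      (forall x y, phi (br x y) = br (phi x) (phi y)) &
      (forall x y z, br (phi x) (br y z) + br (phi y) (br z x)
                     + br (phi z) (br x y) = 0)].

Definition weakly_involutive (br : V -> V -> V) (phi : V -> V) : Prop :=
  forall x y, br (phi (phi x)) y = br x y.

Definition tens2 (u v : V) : T2 := \matrix_(k, l) (u 0 k * v 0 l).
Definition tens3 (u v w : V) : T3 :=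
  [ffun p : 'I_n * 'I_n * 'I_n => u 0 p.1.1 * v 0 p.1.2 * w 0 p.2].

Definition tmap2 (f g : V -> V) (t : T2) : T2 :=
  \sum_i \sum_j t i j *: tens2 (f (ebasis i)) (g (ebasis j)).
Definition tmap3 (f g h : V -> V) (t : T3) : T3 :=
  [ffun p => \sum_i \sum_j \sum_k t (i, j, k) *
     tens3 (f (ebasis i)) (g (ebasis j)) (h (ebasis k)) p].

Definition tsigma (t : T2) : T2 := t^T.

Definition ad2 (br : V -> V -> V) (phi : V -> V) (z : V) (t : T2) : T2 :=
  tmap2 (br z) phi t + tmap2 phi (br z) t.

(* [r, r]_g, computed from the decomposition r = sum_(a,b) (r a b e_a) (x) e_b *)
Definition rr (br : V -> V -> V) (phi : V -> V) (r : T2) : T3 :=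
  [ffun p => \sum_a \sum_b \sum_c \sum_d (r a b * r c d) *
    (tens3 (br (ebasis a) (ebasis c)) (phi (ebasis b)) (phi (ebasis d)) p
     + tens3 (phi (ebasis a)) (br (ebasis b) (ebasis c)) (phi (ebasis d)) p
     + tens3 (phi (ebasis a)) (phi (ebasis c)) (br (ebasis b) (ebasis d)) p)].

Definition dualmap (phi : V -> V) (a : V) : V :=
  \row_k pairing a (phi (ebasis k)).

Definition pair2 (t : T2) (a b : V) : K := \sum_i \sum_j t i j * a 0 i * b 0 j.

Definition cob_delta (br : V -> V -> V) (phi : V -> V) (r : T2) (x : V) : T2 :=
  ad2 br phi x r.

Definition dual_bracket (br : V -> V -> V) (phi : V -> V) (r : T2)
  (a b : V) : V :=
  \row_k pair2 (cob_delta br phi r (ebasis k)) a b.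

Definition delta_of (brd : V -> V -> V) (x : V) : T2 :=
  \matrix_(i, j) pairing (brd (ebasis i) (ebasis j)) x.

Definition hom_lie_bialgebra (br : V -> V -> V) (phi : V -> V)
  (brd : V -> V -> V) : Prop :=
  [/\ hom_lie br phi, weakly_involutive br phi,
      hom_lie brd (dualmap phi), weakly_involutive brd (dualmap phi) &
      forall x y, delta_of brd (br x y)
        = ad2 br phi (phi x) (delta_of brd y)
          - ad2 br phi (phi y) (delta_of brd x)].

Definition coboundary_hom_lie_bialgebra (br : V -> V -> V) (phi : V -> V)
  (brd : V -> V -> V) : Prop :=
  hom_lie_bialgebra br phi brd /\
  exists r' : T2, tmap2 phi id r' = tmap2 id phi r' /\
    forall x, delta_of brd x = ad2 br phi x r'.

End HomLie.

(* Main.v *)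
Require Import Defs.
From HB Require Import structures.
From mathcomp Require Import all_boot all_order all_algebra.
From mathcomp Require Import ring.
Set Implicit Arguments.
Unset Strict Implicit.
Unset Printing Implicit Defensive.
Import GRing.Theory.
Local Open Scope ring_scope.

Section Gen.
Variables (K : fieldType) (n : nat).
Notation V := 'rV[K]_n.
Notation e := (@ebasis K n).

Definition linS (g : V -> K) := forall (k : K) x y, g (k *: x + y) = k * g x + g y.
Definition linV (g : V -> V) := forall (k : K) x y, g (k *: x + y) = k *: g x + g y.
Definition bilin (F : V -> V -> K) :=
  (forall q, linS (fun p => F p q)) /\ (forall p, linS (fun q => F p q)).

Lemma linS0 g : linS g -> g 0 = 0.
Proof. by move=> h; have := h 1 0 0; rewrite scaler0 addr0 mul1r -{1}[g 0]addr0 => /addrI <-. Qed.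
Lemma linSD g : linS g -> forall x y, g (x + y) = g x + g y.
Proof. by move=> h x y; rewrite -[x]scale1r h mul1r scale1r. Qed.
Lemma linSZ g : linS g -> forall k x, g (k *: x) = k * g x.
Proof. by move=> h k x; rewrite -[k *: x]addr0 h linS0 // addr0. Qed.
Lemma linSN g : linS g -> forall x, g (- x) = - g x.
Proof. by move=> h x; rewrite -scaleN1r linSZ // mulN1r. Qed.
Lemma linSB g : linS g -> forall x y, g (x - y) = g x - g y.
Proof. by move=> h x y; rewrite linSD // linSN. Qed.
Lemma linS_sum g I (s : seq I) P (F : I -> V) : linS g ->
  g (\sum_(i <- s | P i) F i) = \sum_(i <- s | P i) g (F i).
Proof. by move=> h; apply: (big_morph g); [exact: linSD | exact: linS0]. Qed.

Lemma linV0 g : linV g -> g 0 = 0.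
Proof. by move=> h; have := h 1 0 0; rewrite scaler0 addr0 scale1r -{1}[g 0]addr0 => /addrI <-. Qed.
Lemma linVD g : linV g -> forall x y, g (x + y) = g x + g y.
Proof. by move=> h x y; rewrite -[x]scale1r h !scale1r. Qed.
Lemma linVZ g : linV g -> forall k x, g (k *: x) = k *: g x.
Proof. by move=> h k x; rewrite -[k *: x]addr0 h linV0 // addr0. Qed.
Lemma linVN g : linV g -> forall x, g (- x) = - g x.
Proof. by move=> h x; rewrite -scaleN1r linVZ // scaleN1r. Qed.

Lemma pairing_e (a : V) i : pairing a (e i) = a 0 i.
Proof.
rewrite /pairing (bigD1 i) //= big1 ?addr0; first by rewrite /ebasis mxE !eqxx mulr1.
by move=> j /negPf nji; rewrite /ebasis mxE nji ?andbF mulr0.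
Qed.
Lemma pairing_eL (a : V) i : pairing (e i) a = a 0 i.
Proof.
rewrite /pairing (bigD1 i) //= big1 ?addr0; first by rewrite /ebasis mxE !eqxx mul1r.
by move=> j /negPf nji; rewrite /ebasis mxE nji ?andbF mul0r.
Qed.
Lemma pairingC (a b : V) : pairing a b = pairing b a.
Proof. by apply: eq_bigr => i _; rewrite mulrC. Qed.
Lemma linS_pairing0 (a : V) : linS (pairing a).
Proof.
move=> k x y; rewrite /pairing mulr_sumr -big_split /=.
by apply: eq_bigr => i _; rewrite !mxE mulrDr mulrCA.
Qed.
Lemma linS_pairing (a : V) f : linV f -> linS (fun v => pairing a (f v)).
Proof. by move=> h k x y; rewrite h linS_pairing0. Qed.
Lemma pairingL k (a b x : V) : pairing (k *: a + b) x = k * pairing a x + pairing b x.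
Proof. by rewrite pairingC linS_pairing0 !(pairingC x). Qed.

Lemma lin_expand g (u : V) : linS g -> g u = \sum_k u 0 k * g (e k).
Proof.
move=> h; rewrite {1}(row_sum_delta u) linS_sum //.
by apply: eq_bigr => i _; rewrite linSZ.
Qed.

Lemma bilin_expand F (u v : V) : bilin F ->
  F u v = \sum_k \sum_l u 0 k * v 0 l * F (e k) (e l).
Proof.
case=> h1 h2; rewrite (lin_expand u (h1 v)).
apply: eq_bigr => k _; rewrite (lin_expand v (h2 (e k))) mulr_sumr.
by apply: eq_bigr => l _; rewrite mulrA [u 0 k * _]mulrC.
Qed.

Definition ctr (t : 'M[K]_n) (F : V -> V -> K) : K :=
  \sum_i \sum_j t i j * F (e i) (e j).

Lemma ctr_ext t F G : (forall p q, F p q = G p q) -> ctr t F = ctr t G.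
Proof. by move=> h; apply: eq_bigr => i _; apply: eq_bigr => j _; rewrite h. Qed.
Lemma ctrDF t F G : ctr t (fun p q => F p q + G p q) = ctr t F + ctr t G.
Proof.
rewrite /ctr -big_split; apply: eq_bigr => i _ /=.
by rewrite -big_split; apply: eq_bigr => j _; rewrite mulrDr.
Qed.
Lemma ctrZF t c F : ctr t (fun p q => c * F p q) = c * ctr t F.
Proof.
rewrite /ctr mulr_sumr; apply: eq_bigr => i _ /=.
by rewrite mulr_sumr; apply: eq_bigr => j _; rewrite mulrCA.
Qed.
Lemma ctrNF t F : ctr t (fun p q => - F p q) = - ctr t F.
Proof. by rewrite -mulN1r -ctrZF; apply: ctr_ext => p q; rewrite mulN1r. Qed.
Lemma ctrBF t F G : ctr t (fun p q => F p q - G p q) = ctr t F - ctr t G.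
Proof. by rewrite ctrDF ctrNF. Qed.
Lemma ctrD t s F : ctr (t + s) F = ctr t F + ctr s F.
Proof.
rewrite /ctr -big_split; apply: eq_bigr => i _ /=.
by rewrite -big_split; apply: eq_bigr => j _; rewrite mxE mulrDl.
Qed.
Lemma ctr0 F : ctr 0 F = 0.
Proof. by rewrite /ctr big1 // => i _; rewrite big1 // => j _; rewrite mxE mul0r. Qed.
Lemma ctrZ c t F : ctr (c *: t) F = c * ctr t F.
Proof.
rewrite /ctr mulr_sumr; apply: eq_bigr => i _ /=.
by rewrite mulr_sumr; apply: eq_bigr => j _; rewrite mxE mulrA.
Qed.
Lemma ctrN t F : ctr (- t) F = - ctr t F.
Proof. by rewrite -scaleN1r ctrZ mulN1r. Qed.
Lemma ctrB t s F : ctr (t - s) F = ctr t F - ctr s F.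
Proof. by rewrite ctrD ctrN. Qed.
Lemma ctr_sum I (s : seq I) P (A : I -> 'M[K]_n) F :
  ctr (\sum_(i <- s | P i) A i) F = \sum_(i <- s | P i) ctr (A i) F.
Proof. by apply: (big_morph (fun A => ctr A F)) => [x y|]; rewrite ?ctrD ?ctr0. Qed.
Lemma ctr_tens2 (u v : V) F : bilin F -> ctr (tens2 u v) F = F u v.
Proof.
move=> h; rewrite (bilin_expand u v h) /ctr.
by apply: eq_bigr => i _; apply: eq_bigr => j _; rewrite mxE.
Qed.
Lemma ctr_tmap2 f g t F : bilin F ->
  ctr (tmap2 f g t) F = ctr t (fun p q => F (f p) (g q)).
Proof.
move=> h; rewrite /tmap2 ctr_sum; apply: eq_bigr => i _.
by rewrite ctr_sum; apply: eq_bigr => j _; rewrite ctrZ ctr_tens2.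
Qed.
Lemma ctr_sigma t F : ctr (tsigma t) F = ctr t (fun p q => F q p).
Proof.
rewrite /ctr exchange_big; apply: eq_bigr => i _; apply: eq_bigr => j _.
by rewrite /tsigma mxE.
Qed.
Lemma ctr_exch t s H :
  ctr t (fun p q => ctr s (H p q)) = ctr s (fun p' q' => ctr t (fun p q => H p q p' q')).
Proof.
rewrite /ctr; under eq_bigr => i _ do under eq_bigr => j _ do rewrite mulr_sumr.
under eq_bigr => i _ do rewrite exchange_big.
rewrite exchange_big; apply: eq_bigr => k _.
under eq_bigr => i _ do under eq_bigr => j _ do rewrite mulr_sumr.
under eq_bigr => i _ do rewrite exchange_big.
rewrite exchange_big /=; apply: eq_bigr => l _.
rewrite mulr_sumr; apply: eq_bigr => i _; rewrite mulr_sumr; apply: eq_bigr => j _.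
by rewrite mulrCA.
Qed.
Lemma linS_ctr t H : (forall p q, linS (fun v => H v p q)) -> linS (fun v => ctr t (H v)).
Proof.
move=> h k x y; rewrite /ctr mulr_sumr -big_split; apply: eq_bigr => i _ /=.
rewrite mulr_sumr -big_split; apply: eq_bigr => j _ /=.
by rewrite h mulrDr mulrCA.
Qed.
Lemma ctr_entry t i j : ctr t (fun u v => pairing (e i) u * pairing (e j) v) = t i j.
Proof.
rewrite /ctr (bigD1 i) //= [X in _ + X]big1 ?addr0.
- rewrite (bigD1 j) //= [X in _ + X]big1 ?addr0.
  + by rewrite !pairing_eL /ebasis !mxE !eqxx /= ?mulr1n ?mulr1.
  + move=> l; rewrite eq_sym => /negPf nlj.
    by rewrite !pairing_eL /ebasis !mxE nlj ?andbF /= ?mulr0n ?mulr0.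
- move=> k; rewrite eq_sym => /negPf nki; rewrite big1 // => l _.
  by rewrite !pairing_eL /ebasis !mxE nki ?andbF /= ?mulr0n ?mul0r ?mulr0.
Qed.

Lemma bilin_pp (a b : V) : bilin (fun u v => pairing a u * pairing b v).
Proof.
by split=> q k x y /=; rewrite linS_pairing0; ring.
Qed.

Notation T3 := {ffun 'I_n * 'I_n * 'I_n -> K}.
Definition pair3 (T : T3) (a b c : V) : K :=
  \sum_i \sum_j \sum_k T (i, j, k) * (a 0 i * b 0 j * c 0 k).
Definition M (a b c : V) (u v w : V) : K := pairing a u * pairing b v * pairing c w.

Lemma sum3P (G : 'I_n -> 'I_n -> 'I_n -> K) :
  \sum_i \sum_j \sum_k G i j k = \sum_(p : 'I_n * 'I_n * 'I_n) G p.1.1 p.1.2 p.2.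
Proof.
under eq_bigr => i _ do rewrite (pair_bigA _ (fun j k => G i j k)).
rewrite (pair_bigA _ (fun i q => G i q.1 q.2)) /=.
rewrite (reindex (fun p : 'I_n * 'I_n * 'I_n => (p.1.1, (p.1.2, p.2)))) /=.
  by apply: eq_bigr => -[[i j] k].
by exists (fun q : 'I_n * ('I_n * 'I_n) => (q.1, q.2.1, q.2.2)) => [[[i j] k]|[i [j k]]].
Qed.

Lemma sum3_exch (G : 'I_n -> 'I_n -> 'I_n -> 'I_n -> 'I_n -> 'I_n -> K) :
  \sum_i \sum_j \sum_k \sum_i' \sum_j' \sum_k' G i j k i' j' k' =
  \sum_i' \sum_j' \sum_k' \sum_i \sum_j \sum_k G i j k i' j' k'.
Proof.
rewrite sum3P.
under eq_bigr => p _ do rewrite sum3P.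
rewrite exchange_big sum3P; apply: eq_bigr => q _.
by rewrite sum3P.
Qed.

Lemma pair3_e T i j k : pair3 T (e i) (e j) (e k) = T (i, j, k).
Proof.
rewrite /pair3 (bigD1 i) //= [X in _ + X]big1 ?addr0.
- rewrite (bigD1 j) //= [X in _ + X]big1 ?addr0.
  + rewrite (bigD1 k) //= [X in _ + X]big1 ?addr0.
    * by rewrite /ebasis !mxE !eqxx /=; ring.
    * move=> l /negPf nl.
      by rewrite /ebasis !mxE nl ?andbF /=; ring.
  + move=> l /negPf nl; rewrite big1 // => m _.
    by rewrite /ebasis !mxE nl ?andbF /=; ring.
- move=> l /negPf nl; rewrite big1 // => m _; rewrite big1 // => o _.
  by rewrite /ebasis !mxE nl ?andbF /=; ring.
Qed.

Lemma pair3D (T S : T3) a b c : pair3 (T + S) a b c = pair3 T a b c + pair3 S a b c.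
Proof.
rewrite /pair3 -big_split; apply: eq_bigr => i _ /=; rewrite -big_split.
apply: eq_bigr => j _ /=; rewrite -big_split; apply: eq_bigr => k _ /=.
by rewrite ffunE mulrDl.
Qed.
Lemma pair30 a b c : pair3 0 a b c = 0.
Proof.
by rewrite /pair3 big1 // => i _; rewrite big1 // => j _; rewrite big1 // => k _; rewrite ffunE mul0r.
Qed.

Lemma prod3_sum (A B C : 'I_n -> K) :
  (\sum_i A i) * (\sum_j B j) * (\sum_k C k) = \sum_i \sum_j \sum_k A i * B j * C k.
Proof.
have -> : (\sum_i A i) * (\sum_j B j) = \sum_i \sum_j A i * B j.
  by rewrite mulr_suml; apply: eq_bigr => i _; rewrite mulr_sumr.
rewrite mulr_suml; apply: eq_bigr => i _; rewrite mulr_suml; apply: eq_bigr => j _.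
by rewrite mulr_sumr.
Qed.

Lemma pair3_tmap3 f g h (T : T3) a b c :
  pair3 (tmap3 f g h T) a b c =
  \sum_i \sum_j \sum_k T (i, j, k) * M a b c (f (e i)) (g (e j)) (h (e k)).
Proof.
rewrite /pair3 /M /pairing.
under eq_bigr => i1 _ do under eq_bigr => j1 _ do under eq_bigr => k1 _ do
  (rewrite ffunE mulr_suml; under eq_bigr => i _ do
     (rewrite mulr_suml; under eq_bigr => j _ do rewrite mulr_suml)).
rewrite sum3_exch; apply: eq_bigr => i _; apply: eq_bigr => j _; apply: eq_bigr => k _.
rewrite prod3_sum mulr_sumr; apply: eq_bigr => i1 _.
rewrite mulr_sumr; apply: eq_bigr => j1 _.
rewrite mulr_sumr; apply: eq_bigr => k1 _.
rewrite ffunE /=; ring.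
Qed.

End Gen.

Section Hom.
Variables (K : fieldType) (n : nat).
Notation V := 'rV[K]_n.
Notation e := (@ebasis K n).
Variables (br : V -> V -> V) (phi : V -> V) (r : 'M[K]_n).
Hypothesis phiL : linV phi.
Hypothesis brL1 : forall z, linV (fun x => br x z).
Hypothesis brL2 : forall z, linV (br z).
Hypothesis brN : forall x y, br x y = - br y x.
Hypothesis brM : forall x y, phi (br x y) = br (phi x) (phi y).
Hypothesis brJ : forall x y z,
  br (phi x) (br y z) + br (phi y) (br z x) + br (phi z) (br x y) = 0.
Hypothesis WI : forall x y, br (phi (phi x)) y = br x y.
Hypothesis HR : tmap2 phi id r = tmap2 id phi r.

Lemma linV_idf : linV (fun v : V => v). Proof. by []. Qed.
Lemma linV_phi' (g : V -> V) : linV g -> linV (fun v => phi (g v)).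
Proof. by move=> h k x y; rewrite h phiL. Qed.
Lemma linV_brl (g : V -> V) (z : V) : linV g -> linV (fun v => br (g v) z).
Proof. by move=> h k x y; rewrite h brL1. Qed.
Lemma linV_brr (g : V -> V) (z : V) : linV g -> linV (fun v => br z (g v)).
Proof. by move=> h k x y; rewrite h brL2. Qed.
Lemma linS_add (g h : V -> K) : linS g -> linS h -> linS (fun v => g v + h v).
Proof. by move=> hg hh k x y; rewrite hg hh; ring. Qed.
Lemma linS_opp (g : V -> K) : linS g -> linS (fun v => - g v).
Proof. by move=> hg k x y; rewrite hg; ring. Qed.
Lemma linS_mull (g : V -> K) c : linS g -> linS (fun v => c * g v).
Proof. by move=> hg k x y; rewrite hg; ring. Qed.
Lemma linS_mulr (g : V -> K) c : linS g -> linS (fun v => g v * c).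
Proof. by move=> hg k x y; rewrite hg; ring. Qed.
Lemma linS_M1 (a b c : V) f (w2 w3 : V) : linV f -> linS (fun v => M a b c (f v) w2 w3).
Proof. by move=> h k x y; rewrite /M h linS_pairing0; ring. Qed.
Lemma linS_M2 (a b c : V) f (w1 w3 : V) : linV f -> linS (fun v => M a b c w1 (f v) w3).
Proof. by move=> h k x y; rewrite /M h linS_pairing0; ring. Qed.
Lemma linS_M3 (a b c : V) f (w1 w2 : V) : linV f -> linS (fun v => M a b c w1 w2 (f v)).
Proof. by move=> h k x y; rewrite /M h linS_pairing0; ring. Qed.

Ltac lin := repeat (first [ apply: linS_ctr => ? ?
  | apply: linS_add | apply: linS_opp
  | apply: linS_M1 | apply: linS_M2 | apply: linS_M3 | apply: linS_pairing
  | apply: linS_mulr | apply: linS_mull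
  | apply: linV_idf | exact: phiL | exact: brL2 | exact: brL1
  | apply: linV_phi' | apply: linV_brl | apply: linV_brr ]; cbv beta).
Ltac bil := split => ?; cbv beta; lin.

Lemma bilin_comp (G : V -> V -> K) (f g : V -> V) : bilin G -> linV f -> linV g -> bilin (fun p q => G (f p) (g q)).
Proof.
case=> h1 h2 hf hg; split=> q k x y /=; first by rewrite hf h1.
by rewrite hg h2.
Qed.

Lemma rswap (G : V -> V -> K) : bilin G ->
  ctr r (fun p q => G (phi p) q) = ctr r (fun p q => G p (phi q)).
Proof.
move=> hG; transitivity (ctr (tmap2 phi id r) G); first by rewrite ctr_tmap2.
by rewrite HR ctr_tmap2.
Qed.

Lemma Lsw2 (G : V -> V -> K) : bilin G ->
  ctr r (fun p q => G (phi (phi p)) q) = ctr r (fun p q => G p (phi (phi q))).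
Proof.
move=> hG.
have h1 := rswap (bilin_comp hG phiL linV_idf).
have h2 := rswap (bilin_comp hG linV_idf phiL).
exact: (etrans h1 h2).
Qed.

Lemma Lw (G : V -> V -> K) : bilin G -> (forall s w, G (phi (phi s)) w = G s w) ->
  ctr r (fun p q => G (phi p) (phi (phi q))) = ctr r (fun p q => G p (phi q)).
Proof.
move=> hG hW.
have h1 := rswap (bilin_comp hG phiL phiL).
have h2 := rswap (bilin_comp hG (linV_phi' phiL) linV_idf).
have h3 := rswap hG.
transitivity (ctr r (fun p q => G (phi (phi p)) (phi q))); first exact: (esym h1).
transitivity (ctr r (fun p q => G (phi (phi (phi p))) q)); first exact: (esym h2).
by rewrite -h3; apply: ctr_ext => p q; rewrite hW.
Qed.

Lemma Lw' (G : V -> V -> K) : bilin G -> (forall s w, G s (phi (phi w)) = G s w) ->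
  ctr r (fun p q => G (phi (phi p)) (phi q)) = ctr r (fun p q => G (phi p) q).
Proof.
move=> hG hW.
have h1 := rswap (bilin_comp hG phiL phiL).
have h2 := rswap (bilin_comp hG linV_idf (linV_phi' phiL)).
have h3 := rswap hG.
transitivity (ctr r (fun p q => G (phi p) (phi (phi q)))); first exact: h1.
transitivity (ctr r (fun p q => G p (phi (phi (phi q))))); first exact: h2.
by rewrite h3; apply: ctr_ext => p q; rewrite hW.
Qed.

Definition Dsum (x : V) (F : V -> V -> K) :=
  ctr r (fun p q => F (br x p) (phi q) + F (phi p) (br x q)).

Lemma Dsum_ext (x : V) F G : (forall u v, F u v = G u v) -> Dsum x F = Dsum x G.
Proof. by move=> h; apply: ctr_ext => p q; rewrite !h. Qed.

Lemma ctr_ad2 (z : V) t F : bilin F ->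
  ctr (ad2 br phi z t) F = ctr t (fun p q => F (br z p) (phi q) + F (phi p) (br z q)).
Proof. by move=> hF; rewrite /ad2 ctrD !ctr_tmap2 // -ctrDF. Qed.

Lemma pair2_ctr (t : 'M[K]_n) (a b : V) : pair2 t a b = ctr t (fun u v => pairing a u * pairing b v).
Proof.
by apply: eq_bigr => i _; apply: eq_bigr => j _; rewrite !pairing_e mulrA.
Qed.

Lemma pairing_brd (a b x : V) :
  pairing (dual_bracket br phi r a b) x = Dsum x (fun u v => pairing a u * pairing b v).
Proof.
have hl : linS (fun z => Dsum z (fun u v => pairing a u * pairing b v)).
  by rewrite /Dsum; lin.
rewrite (lin_expand x hl) {1}/pairing; apply: eq_bigr => k _.
rewrite mxE pair2_ctr /cob_delta ctr_ad2; last exact: bilin_pp.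
by rewrite mulrC.
Qed.

Lemma pairing_dual (a u : V) : pairing (dualmap phi a) u = pairing a (phi u).
Proof.
have hl : linS (fun z => pairing a (phi z)) by lin.
rewrite (lin_expand u hl) {1}/pairing; apply: eq_bigr => k _.
by rewrite mxE mulrC.
Qed.


Lemma phiD x y : phi (x + y) = phi x + phi y. Proof. exact: linVD. Qed.
Lemma phiN x : phi (- x) = - phi x. Proof. exact: linVN. Qed.
Lemma brDl x y z : br (x + y) z = br x z + br y z.
Proof. exact: (linVD (brL1 z)). Qed.
Lemma brNl x z : br (- x) z = - br x z.
Proof. exact: (linVN (brL1 z)). Qed.
Lemma brDr z x y : br z (x + y) = br z x + br z y.
Proof. exact: (linVD (brL2 z)). Qed.
Lemma brNr z x : br z (- x) = - br z x.
Proof. exact: (linVN (brL2 z)). Qed.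
Lemma WIr x y : br x (phi (phi y)) = br x y.
Proof. by rewrite brN WI -brN. Qed.
Lemma phi2br x y : phi (phi (br x y)) = br x y.
Proof. by rewrite !brM WI WIr. Qed.
Lemma HJ' x y z : br (phi x) (br y z) = br (br x y) (phi z) + br (phi y) (br x z).
Proof.
have h := brJ x y z.
rewrite (brN z x) brNr (brN (phi z)) -addrA -opprD in h.
by move/eqP: h; rewrite subr_eq0 addrC => /eqP.
Qed.

Section MM.
Variables (a b c : V).
Notation MM := (M a b c).
Lemma MD1 x y v w : MM (x + y) v w = MM x v w + MM y v w.
Proof. exact: (linSD (linS_M1 _ _ _ _ _ linV_idf)). Qed.
Lemma MD2 x y v w : MM v (x + y) w = MM v x w + MM v y w.
Proof. exact: (linSD (linS_M2 _ _ _ _ _ linV_idf)). Qed.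
Lemma MD3 x y v w : MM v w (x + y) = MM v w x + MM v w y.
Proof. exact: (linSD (linS_M3 _ _ _ _ _ linV_idf)). Qed.
Lemma MN1 x v w : MM (- x) v w = - MM x v w.
Proof. exact: (linSN (linS_M1 _ _ _ _ _ linV_idf)). Qed.
Lemma MN2 x v w : MM v (- x) w = - MM v x w.
Proof. exact: (linSN (linS_M2 _ _ _ _ _ linV_idf)). Qed.
Lemma MN3 x v w : MM v w (- x) = - MM v w x.
Proof. exact: (linSN (linS_M3 _ _ _ _ _ linV_idf)). Qed.
End MM.

Section Inner.
Variables (a b c u v : V).
Notation MM := (M a b c).
Lemma s1 : ctr r (fun p q => MM (phi u) (br v (phi p)) (phi (phi q)))
         = ctr r (fun p q => MM (phi u) (br v p) (phi q)).
Proof.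
apply: (Lw (G := fun s w => MM (phi u) (br v s) w)); first by bil.
by move=> s w; rewrite WIr.
Qed.
Lemma s5 : ctr r (fun p q => MM (br u (phi p)) (phi v) (phi (phi q)))
         = ctr r (fun p q => MM (br u p) (phi v) (phi q)).
Proof.
apply: (Lw (G := fun s w => MM (br u s) (phi v) w)); first by bil.
by move=> s w; rewrite WIr.
Qed.
Lemma s4 : ctr r (fun p q => MM (br (phi p) u) (phi (phi q)) (phi v))
         = - ctr r (fun p q => MM (br u p) (phi q) (phi v)).
Proof.
under ctr_ext => p q do rewrite brN MN1.
rewrite ctrNF; congr (- _).
apply: (Lw (G := fun s w => MM (br u s) w (phi v))); first by bil.
by move=> s w; rewrite WIr.
Qed.
Lemma s2 : ctr r (fun p q => MM (phi u) (phi (phi p)) (br v (phi q)))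
         = ctr r (fun p q => MM (phi u) (phi p) (br v q)).
Proof.
apply: (Lw' (G := fun s w => MM (phi u) s (br v w))); first by bil.
by move=> s w; rewrite WIr.
Qed.
Lemma s3 : ctr r (fun p q => MM (phi (phi p)) (phi u) (br (phi q) v))
         = - ctr r (fun p q => MM (phi p) (phi u) (br v q)).
Proof.
under ctr_ext => p q do rewrite brN MN3.
rewrite ctrNF; congr (- _).
apply: (Lw' (G := fun s w => MM s (phi u) (br v w))); first by bil.
by move=> s w; rewrite WIr.
Qed.
Lemma s6 : ctr r (fun p q => MM (phi (phi p)) (br (phi q) u) (phi v))
         = - ctr r (fun p q => MM (phi p) (br u q) (phi v)).
Proof.
under ctr_ext => p q do rewrite brN MN2.
rewrite ctrNF; congr (- _).
apply: (Lw' (G := fun s w => MM s (br u w) (phi v))); first by bil.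
by move=> s w; rewrite WIr.
Qed.
End Inner.


Lemma Dsum_add x F G : Dsum x (fun u v => F u v + G u v) = Dsum x F + Dsum x G.
Proof. by rewrite /Dsum -ctrDF; apply: ctr_ext => p q; rewrite addrACA. Qed.
Lemma Dsum_opp x F : Dsum x (fun u v => - F u v) = - Dsum x F.
Proof. by rewrite /Dsum -ctrNF; apply: ctr_ext => p q; rewrite opprD. Qed.
Lemma Dsum_zero x : Dsum x (fun _ _ => 0) = 0.
Proof. by rewrite /Dsum /ctr big1 // => i _; rewrite big1 // => j _; rewrite addr0 mulr0. Qed.

Section CondI.
Hypothesis hi : forall x, ad2 br phi x (r + tsigma r) = 0.

Lemma CI z F : bilin F ->
  ctr r (fun p q => F (br z p) (phi q) + F (phi p) (br z q))
  + ctr r (fun p q => F (br z q) (phi p) + F (phi q) (br z p)) = 0.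
Proof.
move=> hF; have := congr1 (fun t => ctr t F) (hi z).
by rewrite /= ctr0 ctr_ad2 // ctrD ctr_sigma.
Qed.

Lemma S0 x F : bilin F -> Dsum x F + Dsum x (fun u v => F v u) = 0.
Proof.
move=> hF; rewrite /Dsum -(CI x hF); congr (_ + _).
by apply: ctr_ext => p q; rewrite addrC.
Qed.
End CondI.

Lemma sum34_exch (G : 'I_n -> 'I_n -> 'I_n -> 'I_n -> 'I_n -> 'I_n -> 'I_n -> K) :
  \sum_i \sum_j \sum_k \sum_a \sum_b \sum_c \sum_d G i j k a b c d =
  \sum_a \sum_b \sum_c \sum_d \sum_i \sum_j \sum_k G i j k a b c d.
Proof.
rewrite sum3P exchange_big; apply: eq_bigr => a _.
rewrite exchange_big; apply: eq_bigr => b _.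
rewrite exchange_big; apply: eq_bigr => c _.
rewrite exchange_big; apply: eq_bigr => d _.
by rewrite sum3P.
Qed.

Lemma sum4_mull (X : 'I_n -> 'I_n -> 'I_n -> 'I_n -> K) y :
  (\sum_a \sum_b \sum_c \sum_d X a b c d) * y = \sum_a \sum_b \sum_c \sum_d X a b c d * y.
Proof.
rewrite mulr_suml; apply: eq_bigr => a _; rewrite mulr_suml; apply: eq_bigr => b _.
by rewrite mulr_suml; apply: eq_bigr => c _; rewrite mulr_suml.
Qed.

Lemma sum3_lin (k : K) (A B C Mf : 'I_n -> 'I_n -> 'I_n -> K) :
  \sum_i \sum_j \sum_l (k * (A i j l + B i j l + C i j l)) * Mf i j l =
  k * (\sum_i \sum_j \sum_l A i j l * Mf i j l + \sum_i \sum_j \sum_l B i j l * Mf i j l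
       + \sum_i \sum_j \sum_l C i j l * Mf i j l).
Proof. by rewrite !sum3P -!big_split mulr_sumr; apply: eq_bigr => p _ /=; ring. Qed.

Lemma ctr2E (s : 'M[K]_n) (H : V -> V -> V -> V -> K) :
  ctr r (fun p q => ctr s (H p q)) =
  \sum_a \sum_b \sum_c \sum_d (r a b * s c d) * H (e a) (e b) (e c) (e d).
Proof.
apply: eq_bigr => a _; apply: eq_bigr => b _; rewrite /ctr mulr_sumr.
apply: eq_bigr => c _; rewrite mulr_sumr; apply: eq_bigr => d _; by rewrite mulrA.
Qed.

Lemma tri_expand (f g h : V -> V) (u v w a b c : V) : linV f -> linV g -> linV h ->
  \sum_i \sum_j \sum_k tens3 u v w (i, j, k) * M a b c (f (e i)) (g (e j)) (h (e k))
  = M a b c (f u) (g v) (h w).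
Proof.
move=> hf hg hh.
rewrite (lin_expand u (linS_M1 a b c (g v) (h w) hf)); apply: eq_bigr => i _.
rewrite (lin_expand v (linS_M2 a b c (f (e i)) (h w) hg)) mulr_sumr; apply: eq_bigr => j _.
rewrite (lin_expand w (linS_M3 a b c (f (e i)) (g (e j)) hh)) !mulr_sumr.
apply: eq_bigr => k _.
rewrite /tens3 ffunE /=; ring.
Qed.

Lemma pair3_rr (f g h : V -> V) (a b c : V) : linV f -> linV g -> linV h ->
  pair3 (tmap3 f g h (rr br phi r)) a b c =
  ctr r (fun p q => ctr r (fun p' q' =>
     M a b c (f (br p p')) (g (phi q)) (h (phi q'))
   + M a b c (f (phi p)) (g (br q p')) (h (phi q'))
   + M a b c (f (phi p)) (g (phi p')) (h (br q q')))).
Proof.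
move=> hf hg hh; rewrite pair3_tmap3 ctr2E /rr.
under eq_bigr => i _ do under eq_bigr => j _ do under eq_bigr => k _ do
  rewrite ffunE sum4_mull.
rewrite sum34_exch; apply: eq_bigr => a0 _; apply: eq_bigr => b0 _.
apply: eq_bigr => c0 _; apply: eq_bigr => d0 _.
by rewrite sum3_lin !tri_expand.
Qed.

Lemma pairingDl (a b x : V) : pairing (a + b) x = pairing a x + pairing b x.
Proof. by rewrite -[a]scale1r pairingL mul1r scale1r. Qed.

Notation brd := (dual_bracket br phi r).
Notation dphi := (dualmap phi).

Lemma K0gen (a b c x : V) : pairing (brd (dphi a) (brd b c)) x =
  Dsum x (fun u v => pairing a (phi u) *
    ctr r (fun p q => pairing b (br v p) * pairing c (phi q)
                    + pairing b (phi p) * pairing c (br v q))).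
Proof. by rewrite pairing_brd; apply: Dsum_ext => u v; rewrite pairing_dual pairing_brd. Qed.

Section Main.
Variables (a b c : V).
Notation MM := (M a b c).

Definition JJ u v :=
  ctr r (fun p q => MM (phi u) (br v p) (phi q)) + ctr r (fun p q => MM (phi u) (phi p) (br v q))
  + ctr r (fun p q => MM (phi q) (phi u) (br v p)) + ctr r (fun p q => MM (br v q) (phi u) (phi p))
  + ctr r (fun p q => MM (br v p) (phi q) (phi u)) + ctr r (fun p q => MM (phi p) (br v q) (phi u)).

Lemma Jform x : pairing (brd (dphi a) (brd b c) + brd (dphi b) (brd c a) + brd (dphi c) (brd a b)) x
  = Dsum x JJ.
Proof.
rewrite !pairingDl !K0gen -!Dsum_add; apply: Dsum_ext => u v.
rewrite /JJ -!ctrZF -!ctrDF; apply: ctr_ext => p q /=; rewrite /M; ring.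
Qed.

Definition c135 u v p q :=
  MM (br u (phi p)) (phi v) (phi (phi q)) + MM (phi u) (br v (phi p)) (phi (phi q))
  + MM (phi u) (phi (phi p)) (br v (phi q)).
Definition c246 p q u v :=
  MM (br (phi p) u) (phi (phi q)) (phi v) + MM (phi (phi p)) (br (phi q) u) (phi v)
  + MM (phi (phi p)) (phi u) (br (phi q) v).

Lemma CF x : pair3 (tmap3 (br (phi x)) phi phi (rr br phi r)
      + tmap3 phi (br (phi x)) phi (rr br phi r)
      + tmap3 phi phi (br (phi x)) (rr br phi r)) a b c
  = Dsum x (fun u v => ctr r (c135 u v)) + Dsum x (fun u v => ctr r (fun p q => c246 p q u v)).
Proof.
rewrite !pair3D !pair3_rr //.
rewrite /Dsum; under [X in _ = _ + X]ctr_ext => p q do rewrite -ctrDF.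
rewrite [X in _ = _ + X]ctr_exch.
under [X in _ = X + _]ctr_ext => p q do rewrite -ctrDF.
rewrite -!ctrDF; apply: ctr_ext => p q; rewrite -!ctrDF; apply: ctr_ext => p' q'.
rewrite /c135 /c246 (HJ' x p p') (HJ' x q p') (HJ' x q q') !(MD1, MD2, MD3) !brM; ring.
Qed.


Lemma C135 u v : ctr r (c135 u v) =
  ctr r (fun p q => MM (br u p) (phi v) (phi q)) + ctr r (fun p q => MM (phi u) (br v p) (phi q))
  + ctr r (fun p q => MM (phi u) (phi p) (br v q)).
Proof. by rewrite /c135 !ctrDF (s5 a b c u v) (s1 a b c u v) (s2 a b c u v). Qed.

Lemma C246 u v : ctr r (fun p q => c246 p q u v) =
  - ctr r (fun p q => MM (br u p) (phi q) (phi v)) - ctr r (fun p q => MM (phi p) (br u q) (phi v))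
  - ctr r (fun p q => MM (phi p) (phi u) (br v q)).
Proof. by rewrite /c246 !ctrDF (s4 a b c u v) (s6 a b c u v) (s3 a b c u v). Qed.

Definition FB u v := ctr r (fun p q => MM (br v p) (phi q) (phi u)).
Definition FD u v := ctr r (fun p q => MM (phi p) (br v q) (phi u)).
Definition FC u v := ctr r (fun p q => MM (br v q) (phi u) (phi p)).
Definition GG u v := ctr r (fun p q => MM (phi q) (phi u) (br v p) + MM (phi p) (phi u) (br v q)).
Definition WW u v := ctr r (fun p q => MM (br u p) (phi v) (phi q)).

Lemma JC (hi : forall x, ad2 br phi x (r + tsigma r) = 0) x :
  pairing (brd (dphi a) (brd b c) + brd (dphi b) (brd c a) + brd (dphi c) (brd a b)) x
  = pair3 (tmap3 (br (phi x)) phi phi (rr br phi r)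
      + tmap3 phi (br (phi x)) phi (rr br phi r)
      + tmap3 phi phi (br (phi x)) (rr br phi r)) a b c.
Proof.
rewrite Jform CF.
under [X in _ = X + _]Dsum_ext => u v do rewrite C135.
under [X in _ = _ + X]Dsum_ext => u v do rewrite C246.
apply/eqP; rewrite -subr_eq0 opprD addrA -!Dsum_opp -!Dsum_add; apply/eqP.
transitivity (Dsum x (fun u v => (FB u v + FB v u) + (FD u v + FD v u) + (GG u v + GG v u)
   + (FC u v + FC v u) - (WW u v + GG v u + FC v u))).
  by apply: Dsum_ext => u v; rewrite /JJ /FB /FD /GG /FC /WW !ctrDF; ring.
have e1 : Dsum x (fun u v => WW u v + GG v u + FC v u) = 0.
  rewrite -(Dsum_zero x); apply: Dsum_ext => u v.
  have := CI hi u (F := fun s w => MM s (phi v) w); rewrite !ctrDF => E.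
  by rewrite -E; last (by bil); rewrite /WW /GG /FC !ctrDF; ring.
have e2 : Dsum x FB + Dsum x (fun u v => FB v u) = 0 by apply: S0 => //; rewrite /FB; bil.
have e3 : Dsum x FD + Dsum x (fun u v => FD v u) = 0 by apply: S0 => //; rewrite /FD; bil.
have e4 : Dsum x GG + Dsum x (fun u v => GG v u) = 0 by apply: S0 => //; rewrite /GG; bil.
have e5 : Dsum x FC + Dsum x (fun u v => FC v u) = 0 by apply: S0 => //; rewrite /FC; bil.
rewrite Dsum_add Dsum_opp e1 oppr0 addr0 !Dsum_add e2 e3 e4 e5.
by rewrite !addr0.
Qed.

End Main.

Lemma pairingNl (a x : V) : pairing (- a) x = - pairing a x.
Proof. by rewrite /pairing -sumrN; apply: eq_bigr => i _; rewrite mxE mulNr. Qed.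
Lemma pairing0l (x : V) : pairing 0 x = 0.
Proof. by rewrite /pairing big1 // => i _; rewrite mxE mul0r. Qed.

Lemma linS_compV (g : V -> K) (f : V -> V) : linS g -> linV f -> linS (fun v => g (f v)).
Proof. by move=> hg hf k x y; rewrite hf hg. Qed.
Lemma bilinDl (F : V -> V -> K) (u1 u2 w : V) : bilin F -> F (u1 + u2) w = F u1 w + F u2 w.
Proof. by case=> h1 _; exact: (linSD (h1 w)). Qed.
Lemma bilinDr (F : V -> V -> K) (u w1 w2 : V) : bilin F -> F u (w1 + w2) = F u w1 + F u w2.
Proof. by case=> _ h2; exact: (linSD (h2 u)). Qed.
Lemma bilinNl (F : V -> V -> K) (u w : V) : bilin F -> F (- u) w = - F u w.
Proof. by case=> h1 _; exact: (linSN (h1 w)). Qed.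
Lemma bilinNr (F : V -> V -> K) (u w : V) : bilin F -> F u (- w) = - F u w.
Proof. by case=> _ h2; exact: (linSN (h2 u)). Qed.

Lemma bilin_ad (F : V -> V -> K) (z : V) : bilin F ->
  bilin (fun p q => F (br z p) (phi q) + F (phi p) (br z q)).
Proof.
case=> h1 h2; split=> w; apply: linS_add.
- exact: (linS_compV (h1 (phi w)) (brL2 z)).
- exact: (linS_compV (h1 (br z w)) phiL).
- exact: (linS_compV (h2 (br z w)) phiL).
- exact: (linS_compV (h2 (phi w)) (brL2 z)).
Qed.

Lemma i_to_skew (hi : forall x, ad2 br phi x (r + tsigma r) = 0) (a b : V) :
  dual_bracket br phi r a b = - dual_bracket br phi r b a.
Proof.
apply/matrixP => i k; rewrite !mxE !pair2_ctr /cob_delta !ctr_ad2; try exact: bilin_pp.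
have E := CI hi (e k) (bilin_pp a b).
apply/eqP; rewrite -addr_eq0; apply/eqP; rewrite -[RHS]E; congr (_ + _).
by apply: ctr_ext => p q; ring.
Qed.

Lemma skew_to_i (hs : forall a b : V, dual_bracket br phi r a b = - dual_bracket br phi r b a) (x : V) :
  ad2 br phi x (r + tsigma r) = 0.
Proof.
apply/matrixP => i j; rewrite [RHS]mxE.
rewrite -(ctr_entry (ad2 br phi x (r + tsigma r)) i j) ctr_ad2; last exact: bilin_pp.
rewrite ctrD ctr_sigma.
have h := congr1 (fun v => pairing v x) (hs (e i) (e j)).
rewrite /= pairingNl !pairing_brd /Dsum in h.
rewrite h addrC; apply/eqP; rewrite subr_eq0; apply/eqP.
by apply: ctr_ext => p q; ring.
Qed.

Lemma Dsum_phi (z : V) (F : V -> V -> K) : bilin F -> Dsum (phi z) F = Dsum z (fun u v => F (phi u) (phi v)).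
Proof.
move=> hF; rewrite /Dsum; under [in RHS]ctr_ext => p q do rewrite !brM.
rewrite !ctrDF.
congr (_ + _).
- symmetry; apply: (Lw (G := fun s w => F (br (phi z) s) w)).
    exact: (bilin_comp hF (brL2 (phi z)) linV_idf).
  by move=> s w; rewrite WIr.
- symmetry; apply: (Lw' (G := fun s w => F s (br (phi z) w))).
    exact: (bilin_comp hF linV_idf (brL2 (phi z))).
  by move=> s w; rewrite WIr.
Qed.

Lemma brd_mult (a b : V) :
  dualmap phi (dual_bracket br phi r a b)
  = dual_bracket br phi r (dualmap phi a) (dualmap phi b).
Proof.
apply/matrixP => i k; rewrite !mxE pairing_brd pair2_ctr /cob_delta ctr_ad2; last exact: bilin_pp.
rewrite Dsum_phi; last exact: bilin_pp.
by apply: ctr_ext => p q; rewrite !pairing_dual.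
Qed.

Lemma brd_WI (a b : V) :
  dual_bracket br phi r (dualmap phi (dualmap phi a)) b = dual_bracket br phi r a b.
Proof.
apply/matrixP => i k; rewrite !mxE !pair2_ctr /cob_delta !ctr_ad2; try exact: bilin_pp.
under ctr_ext => p q do rewrite !pairing_dual phi2br.
rewrite !ctrDF.
congr (_ + _).
have := Lsw2 (G := fun s w => pairing a (phi s) * pairing b (br (e k) w)) _.
move=> ->; last by bil.
by apply: ctr_ext => p q; rewrite WIr.
Qed.

Lemma brd_lin1 (k : K) (x y z : V) :
  dual_bracket br phi r (k *: x + y) z
  = k *: dual_bracket br phi r x z + dual_bracket br phi r y z.
Proof.
apply/matrixP => i j; rewrite !mxE !pair2_ctr -ctrZF -ctrDF.
by apply: ctr_ext => u v; rewrite pairingL; ring.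
Qed.
Lemma brd_lin2 (k : K) (x y z : V) :
  dual_bracket br phi r z (k *: x + y)
  = k *: dual_bracket br phi r z x + dual_bracket br phi r z y.
Proof.
apply/matrixP => i j; rewrite !mxE !pair2_ctr -ctrZF -ctrDF.
by apply: ctr_ext => u v; rewrite pairingL; ring.
Qed.
Lemma dphi_lin (k : K) (x y : V) :
  dualmap phi (k *: x + y) = k *: dualmap phi x + dualmap phi y.
Proof. by apply/matrixP => i j; rewrite !mxE pairingL. Qed.

Lemma compatF (x y : V) (F : V -> V -> K) : bilin F ->
  ctr (ad2 br phi (br x y) r) F
  = ctr (ad2 br phi (phi x) (ad2 br phi y r) - ad2 br phi (phi y) (ad2 br phi x r)) F.
Proof.
move=> hF; rewrite ctrB !ctr_ad2 //; try exact: bilin_ad.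
rewrite -ctrBF.
transitivity (ctr r (fun p q => F (br (br x y) (phi p)) (phi (phi q)))
   + ctr r (fun p q => F (phi (phi p)) (br (br x y) (phi q)))).
  rewrite !ctrDF; congr (_ + _).
  - symmetry; apply: (Lw (G := fun s w => F (br (br x y) s) w)).
      exact: (bilin_comp hF (brL2 (br x y)) linV_idf).
    by move=> s w; rewrite WIr.
  - symmetry; apply: (Lw' (G := fun s w => F s (br (br x y) w))).
      exact: (bilin_comp hF linV_idf (brL2 (br x y))).
    by move=> s w; rewrite WIr.
rewrite -ctrDF; apply: ctr_ext => p q.
rewrite (HJ' x y p) (HJ' x y q) !(bilinDl _ _ _ hF) !(bilinDr _ _ _ hF) !brM; ring.
Qed.

Lemma compat (x y : V) :
  ad2 br phi (br x y) r
  = ad2 br phi (phi x) (ad2 br phi y r) - ad2 br phi (phi y) (ad2 br phi x r).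
Proof.
apply/matrixP => i j.
by rewrite -!(ctr_entry _ i j) compatF //; exact: bilin_pp.
Qed.

Lemma deltaE (z : V) : delta_of (dual_bracket br phi r) z = ad2 br phi z r.
Proof.
apply/matrixP => i j; rewrite mxE pairing_brd -(ctr_entry (ad2 br phi z r) i j).
by rewrite ctr_ad2 //; exact: bilin_pp.
Qed.


Lemma main_sec :
  let brd := dual_bracket br phi r in
  let cond_i := forall x, ad2 br phi x (r + tsigma r) = 0 in
  let cond_ii := forall x,
      tmap3 (br (phi x)) phi phi (rr br phi r)
      + tmap3 phi (br (phi x)) phi (rr br phi r)
      + tmap3 phi phi (br (phi x)) (rr br phi r) = 0 in
  ((hom_lie brd (dualmap phi) /\ weakly_involutive brd (dualmap phi))
     <-> (cond_i /\ cond_ii))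
  /\ (cond_i /\ cond_ii -> coboundary_hom_lie_bialgebra br phi brd).
Proof.
cbv zeta.
have HB : (forall x, ad2 br phi x (r + tsigma r) = 0) ->
  (forall x, tmap3 (br (phi x)) phi phi (rr br phi r)
      + tmap3 phi (br (phi x)) phi (rr br phi r)
      + tmap3 phi phi (br (phi x)) (rr br phi r) = 0) ->
  hom_lie (dual_bracket br phi r) (dualmap phi)
  /\ weakly_involutive (dual_bracket br phi r) (dualmap phi).
  move=> ci cii; split; last by move=> a0 b0; exact: brd_WI.
  split; first exact: dphi_lin.
  split.
  - exact: brd_lin1.
  - exact: brd_lin2.
  - exact: (i_to_skew ci).
  - exact: brd_mult.
  - move=> a0 b0 c0; apply/matrixP => i k; rewrite [RHS]mxE (ord1 i).
    have := JC a0 b0 c0 ci (e k); rewrite cii pair30 pairing_e => ->.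
    by [].
have hLg : hom_lie br phi.
  split; first exact: phiL.
  split => //.
  - by move=> k x y z; exact: brL1.
  - by move=> k x y z; exact: brL2.
split.
- split.
  + move=> [hLd hWd].
    have skew : forall a b : V, dual_bracket br phi r a b = - dual_bracket br phi r b a.
      by case: hLd => _ [].
    have jac := hLd.2; case: jac => _ _ _ _ jac.
    have ci := skew_to_i skew.
    split; first exact: ci.
    move=> x; apply/ffunP => -[[i j] k]; rewrite [RHS]ffunE -(pair3_e _ i j k).
    by rewrite -(JC (e i) (e j) (e k) ci x) jac pairing0l.
  + by move=> [ci cii]; exact: HB.
- move=> [ci cii]; have [hLd hWd] := HB ci cii.
  split; last first.
    exists r; split; first exact: HR.
    by move=> x; rewrite deltaE.
  split => //.
  by move=> x y; rewrite !deltaE; exact: compat.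
Qed.

End Hom.

Unset Implicit Arguments.
Theorem theorem4p4 (K : fieldType) (n : nat)
  (br : 'rV[K]_n -> 'rV[K]_n -> 'rV[K]_n) (phi : 'rV[K]_n -> 'rV[K]_n)
  (r : 'M[K]_n) :
  hom_lie br phi -> weakly_involutive br phi ->
  tmap2 phi id r = tmap2 id phi r ->
  let brd := dual_bracket br phi r in
  let cond_i := forall x, ad2 br phi x (r + tsigma r) = 0 in
  let cond_ii := forall x,
      tmap3 (br (phi x)) phi phi (rr br phi r)
      + tmap3 phi (br (phi x)) phi (rr br phi r)
      + tmap3 phi phi (br (phi x)) (rr br phi r) = 0 in
  ((hom_lie brd (dualmap phi) /\ weakly_involutive brd (dualmap phi))
     <-> (cond_i /\ cond_ii))
  /\ (cond_i /\ cond_ii -> coboundary_hom_lie_bialgebra br phi brd).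
Proof.
move=> hL hW hR.
case: (hL) => phiL [brL1 brL2 brN brM brJ].
have brL1' : forall z, linV (fun x => br x z) by move=> z k x y; exact: brL1.
have brL2' : forall z, linV (br z) by move=> z k x y; exact: brL2.
have phiL' : linV phi by [].
by apply: main_sec.
Qed.
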